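(* For every integer $n\ge2$, the coefficient of $u\,v^{n+1}w^{n-2}$ in $P_{n/(n+1)}(u,v,w)$ (i.e. the coefficient at the lattice point $(1,n+1)$ of the Newton polygon) equals $7n-10$.
   Context: Markov polynomials. Let $x,y,z$ be indeterminates. Consider the set consisting of all rationals $\rho\in[0,1]$, each written in lowest terms $\rho=a/b$ with integers $a\ge 0$, $b\ge 1$, together with the formal symbol $1/0$. Define Laurent polynomials $M_\rho(x,y,z)$ recursively by $M_{1/0}=y$, $M_{0/1}=x$, $M_{1/1}=\frac{x^2+y^2}{z}$, and: whenever $a/b$, $c/d$ are in this set with $|ad-bc|=1$ and $(a+2c)/(b+2d)\in[0,1]$, then $M_{\frac{a+2c}{b+2d}}=\big(M_{c/d}^2+M_{\frac{a+c}{b+d}}^2\big)/M_{a/b}$. This determines $M_\rho$ for every rational $\rho\in[0,1]$. Numerator. For coprime $1\le a\le b$, $P_{a/b}(u,v,w)$ denotes the homogeneous polynomial of degree $a+b-1$ such that $M_{a/b}(x,y,z)=P_{a/b}(x^2,y^2,z^2)/(x^{a-1}y^{b-1}z^{a+b-1})$; its existence is known. *)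

(* Defs.v *)
From HB Require Import structures.
From mathcomp Require Import all_boot all_order all_algebra.
From mathcomp Require Import fraction.
From mathcomp Require Import mpoly.
Set Implicit Arguments. Unset Strict Implicit. Unset Printing Implicit Defensive.
Import Order.TTheory GRing.Theory Num.Theory.
Local Open Scope ring_scope.

(* Polynomials in the variables x = 'X_0, y = 'X_1, z = 'X_2 with integer
   coefficients, and their field of fractions, which contains the Laurent
   polynomials in x, y, z. *)
Definition Poly3 := {mpoly int[3]}.
Definition RatFun := {fraction Poly3}.
Definition tof (p : Poly3) : RatFun := @FracField.tofrac Poly3 p.

Definition varx : RatFun := tof 'X_0.
Definition vary : RatFun := tof 'X_1.
Definition varz : RatFun := tof 'X_2.

(* A rational a/b in [0,1] in lowest terms (a >= 0, b >= 1), or the formal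
   symbol 1/0, is encoded by the pair of naturals (a, b). *)
Definition admissible (a b : nat) : bool :=
  ((a == 1%N) && (b == 0%N)) || ((0 < b)%N && (a <= b)%N && coprime a b).

Definition farey_neighbours (a b c d : nat) : bool :=
  (a * d == b * c + 1)%N || (b * c == a * d + 1)%N.

(* M : nat -> nat -> RatFun is a family of Markov polynomials, M a b standing
   for M_{a/b}: it satisfies the initial values and the recursive rule of the
   definition. *)
Definition is_markov_family (M : nat -> nat -> RatFun) : Prop :=
  [/\ M 1%N 0%N = vary,
      M 0%N 1%N = varx,
      M 1%N 1%N = (varx ^+ 2 + vary ^+ 2) / varz &
      forall a b c d : nat,
        admissible a b -> admissible c d -> farey_neighbours a b c d ->
        (a + 2 * c <= b + 2 * d)%N ->
        M (a + 2 * c)%N (b + 2 * d)%N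
          = (M c d ^+ 2 + M (a + c)%N (b + d)%N ^+ 2) / M a b].

Definition subst_squares (P : Poly3) : RatFun :=
  tof (P \mPo [tuple ('X_0 : Poly3) ^+ 2; ('X_1 : Poly3) ^+ 2; ('X_2 : Poly3) ^+ 2]).

Definition is_numerator (M : nat -> nat -> RatFun) (a b : nat) (P : Poly3) : Prop :=
  P \is ishomog1 (a + b - 1)%N mdeg /\
  M a b = subst_squares P / (varx ^+ (a - 1) * vary ^+ (b - 1) * varz ^+ (a + b - 1)).

(* Main.v *)
Require Import Defs.
From HB Require Import structures.
From mathcomp Require Import all_boot all_order all_algebra.
From mathcomp Require Import fraction.
From mathcomp Require Import mpoly.
From mathcomp Require Import ring lra zify.
Import GRing.Theory.
Local Open Scope ring_scope.

Definition U : Poly3 := 'X_0.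
Definition V : Poly3 := 'X_1.
Definition W : Poly3 := 'X_2.
Definition Tp : Poly3 := V * W + U * W + (U + V) ^+ 2.
Definition Cq : Poly3 := U * V * W ^+ 2.
Definition P1 : Poly3 := U * W + (U + V) ^+ 2.

Fixpoint Pseq (k : nat) : Poly3 :=
  match k with
  | 0 => 1
  | j1.+1 => match j1 with
             | 0 => P1
             | j.+1 => Tp * Pseq j1 - Cq * Pseq j
             end
  end.

Lemma Pseq_rec j : Pseq j.+2 = Tp * Pseq j.+1 - Cq * Pseq j.
Proof. by []. Qed.

Definition sq : 3.-tuple Poly3 :=
  [tuple ('X_0 : Poly3) ^+ 2; ('X_1 : Poly3) ^+ 2; ('X_2 : Poly3) ^+ 2].
Definition sub (p : Poly3) : Poly3 := p \mPo sq.

Lemma subst_sub p : subst_squares p = tof (sub p).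
Proof. by []. Qed.

Lemma sub_rec j : sub (Pseq j.+2) = sub Tp * sub (Pseq j.+1) - sub Cq * sub (Pseq j).
Proof. by rewrite /sub Pseq_rec rmorphB !rmorphM. Qed.

Lemma subU : sub U = 'X_0 ^+ 2. Proof. by rewrite /sub /U comp_mpolyXU. Qed.
Lemma subV : sub V = 'X_1 ^+ 2. Proof. by rewrite /sub /V comp_mpolyXU. Qed.
Lemma subW : sub W = 'X_2 ^+ 2. Proof. by rewrite /sub /W comp_mpolyXU. Qed.

Definition ones : 'I_3 -> int := fun _ => 1.
Definition ev (p : Poly3) : int := (sub p).@[ones].

Lemma evM p q : ev (p * q) = ev p * ev q.
Proof. by rewrite /ev /sub !rmorphM. Qed.
Lemma evB p q : ev (p - q) = ev p - ev q.
Proof. by rewrite /ev /sub !rmorphB. Qed.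
Lemma evD p q : ev (p + q) = ev p + ev q.
Proof. by rewrite /ev /sub !rmorphD. Qed.
Lemma evX p k : ev (p ^+ k) = ev p ^+ k.
Proof. by rewrite /ev /sub !rmorphXn. Qed.
Lemma evU : ev U = 1. Proof. by rewrite /ev subU expr2 mevalM mevalXU. Qed.
Lemma evV : ev V = 1. Proof. by rewrite /ev subV expr2 mevalM mevalXU. Qed.
Lemma evW : ev W = 1. Proof. by rewrite /ev subW expr2 mevalM mevalXU. Qed.
Lemma ev1 : ev 1 = 1. Proof. by rewrite /ev /sub rmorph1 meval1. Qed.

Lemma ev_pos k : 1 <= ev (Pseq k) <= ev (Pseq k.+1).
Proof.
elim: k => [|k /andP [IH1 IH2]].
  rewrite /= ev1 /P1 ?(evD, evM, evU, evV, evW); lia.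
have -> : ev (Pseq k.+2) = 6 * ev (Pseq k.+1) - ev (Pseq k).
  rewrite Pseq_rec evB /Tp /Cq ?(evD, evM, evU, evV, evW); lia.
move: IH1 IH2; set a := ev (Pseq k); set b := ev (Pseq k.+1); move=> IH1 IH2. apply/andP; split; lia.
Qed.

Lemma sub_Pseq_neq0 k : sub (Pseq k) != 0.
Proof.
apply/negP => /eqP H. have := ev_pos k. by rewrite /ev H meval0.
Qed.

Lemma X_neq0 (i : 'I_3) : ('X_i : Poly3) != 0.
Proof. apply/negP => /eqP H. have := mevalXU ones i. by rewrite H meval0. Qed.

Lemma tofM p q : tof (p * q) = tof p * tof q. Proof. by rewrite /tof rmorphM. Qed.
Lemma tofD p q : tof (p + q) = tof p + tof q. Proof. by rewrite /tof rmorphD. Qed.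
Lemma tofB p q : tof (p - q) = tof p - tof q. Proof. by rewrite /tof rmorphB. Qed.
Lemma tof1 : tof 1 = 1. Proof. by rewrite /tof rmorph1. Qed.
Lemma tof_eq0 p : (tof p == 0) = (p == 0). Proof. by rewrite /tof tofrac_eq0. Qed.

Lemma x_neq0 : varx != 0. Proof. by rewrite /varx tof_eq0 X_neq0. Qed.
Lemma y_neq0 : vary != 0. Proof. by rewrite /vary tof_eq0 X_neq0. Qed.
Lemma z_neq0 : varz != 0. Proof. by rewrite /varz tof_eq0 X_neq0. Qed.

Lemma tsubU : tof (sub U) = varx * varx. Proof. by rewrite subU expr2 tofM. Qed.
Lemma tsubV : tof (sub V) = vary * vary. Proof. by rewrite subV expr2 tofM. Qed.
Lemma tsubW : tof (sub W) = varz * varz. Proof. by rewrite subW expr2 tofM. Qed.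

Lemma subM p q : sub (p * q) = sub p * sub q. Proof. by rewrite /sub rmorphM. Qed.
Lemma subD p q : sub (p + q) = sub p + sub q. Proof. by rewrite /sub rmorphD. Qed.

Definition ST : RatFun := vary^+2 * varz^+2 + varx^+2 * varz^+2 + (varx^+2 + vary^+2)^+2.
Definition aa : RatFun := varx * vary * varz ^+ 2.

Lemma tsubTp : tof (sub Tp) = ST.
Proof. rewrite /Tp /ST ?(subD, subM, tofD, tofM, tsubU, tsubV, tsubW). ring. Qed.
Lemma tsubCq : tof (sub Cq) = aa ^+ 2.
Proof. rewrite /Cq /aa ?(subD, subM, tofD, tofM, tsubU, tsubV, tsubW). ring. Qed.
Lemma tsubP1 : tof (sub P1) = varx^+2 * varz^+2 + (varx^+2 + vary^+2)^+2.
Proof. rewrite /P1 ?(subD, subM, tofD, tofM, tsubU, tsubV, tsubW). ring. Qed.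

Definition S k := tof (sub (Pseq k)).
Lemma S_rec k : S k.+2 = ST * S k.+1 - aa ^+ 2 * S k.
Proof. by rewrite /S sub_rec tofB !tofM tsubTp tsubCq. Qed.
Lemma S0 : S 0 = 1. Proof. rewrite /S (_ : Pseq 0 = 1) //. by rewrite /sub rmorph1 tof1. Qed.
Lemma S_neq0 k : S k != 0. Proof. by rewrite /S tof_eq0 sub_Pseq_neq0. Qed.

Definition D n := varx ^+ (n - 1) * vary ^+ (n.+1 - 1) * varz ^+ (n + n.+1 - 1).
Lemma D_neq0 n : D n != 0.
Proof. rewrite /D. apply: mulf_neq0; first apply: mulf_neq0; apply: expf_neq0; [exact: x_neq0|exact: y_neq0|exact: z_neq0]. Qed.
Lemma D1 : D 1 = vary * varz ^+ 2.
Proof. rewrite /D -[(1 - 1)%N]/0%N -[(2-1)%N]/1%N -[(1 + 2 - 1)%N]/2%N expr0 expr1 mul1r. by []. Qed.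
Lemma D_succ n : (0 < n)%N -> D n.+1 = D n * aa.
Proof.
case: n => // m _; rewrite /D /aa.
rewrite (_ : (m.+1 - 1 = m)%N); last by lia.
rewrite (_ : (m.+2 - 1 = m.+1)%N); last by lia.
rewrite (_ : (m.+3 - 1 = m.+2)%N); last by lia.
rewrite (_ : (m.+1 + m.+2 - 1 = (m + m).+2)%N); last by lia.
rewrite (_ : (m.+2 + m.+3 - 1 = (m + m).+4)%N); last by lia.
rewrite !exprS. ring.
Qed.

Definition ell n := if n is 0 then varx else S n / D n.
Definition tt : RatFun := ST / aa.

Lemma aa_neq0 : aa != 0.
Proof. rewrite /aa. apply: mulf_neq0; first apply: mulf_neq0; [exact: x_neq0|exact: y_neq0|apply: expf_neq0; exact: z_neq0]. Qed.


Lemma g1 (F : fieldType) (x y z st s1 : F) : x != 0 -> y != 0 -> z != 0 ->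
  (st * s1 - (x * y * z ^+ 2) ^+ 2 * 1) / (y * z ^+ 2 * (x * y * z ^+ 2)) =
  st / (x * y * z ^+ 2) * (s1 / (y * z ^+ 2)) - x.
Proof. move=> hx hy hz. field. by rewrite hx hy hz. Qed.

Lemma g2 (F : fieldType) (d a st s1 s2 : F) : d != 0 -> a != 0 ->
  (st * s2 - a ^+ 2 * s1) / (d * a * a) = st / a * (s2 / (d * a)) - s1 / d.
Proof. move=> hd ha. field. by rewrite hd ha. Qed.

Lemma g3 (F : fieldType) (x y z : F) : x != 0 -> y != 0 -> z != 0 ->
  let st := y^+2 * z^+2 + x^+2 * z^+2 + (x^+2 + y^+2)^+2 in
  let l1 := (x^+2 * z^+2 + (x^+2 + y^+2)^+2) / (y * z ^+ 2) in
  (st / (x * y * z ^+ 2) * l1 - x) * x - l1 ^+ 2 = ((x ^+ 2 + y ^+ 2) / z) ^+ 2.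
Proof. move=> hx hy hz /=. field. by rewrite hx hy hz. Qed.

Lemma g4 (F : fieldType) (x y z : F) : y != 0 -> z != 0 ->
  (x ^+ 2 + ((x ^+ 2 + y ^+ 2) / z) ^+ 2) / y =
  (x^+2 * z^+2 + (x^+2 + y^+2)^+2) / (y * z ^+ 2).
Proof. move=> hy hz. field. by rewrite hy hz. Qed.

Lemma ell_rec n : ell n.+2 = tt * ell n.+1 - ell n.
Proof.
have ha := aa_neq0.
case: n => [|m].
  rewrite /ell /tt S_rec S0 (D_succ 1 isT) D1 /aa.
  apply: g1; [exact: x_neq0|exact: y_neq0|exact: z_neq0].
rewrite /ell /tt S_rec (D_succ m.+2 isT) (D_succ m.+1 isT).
apply: g2; [exact: (D_neq0 m.+1)|exact: ha].
Qed.

Definition KK : RatFun := (varx ^+ 2 + vary ^+ 2) / varz.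

Lemma cassini n : ell n.+2 * ell n - ell n.+1 ^+ 2 = KK ^+ 2.
Proof.
elim: n => [|n IH].
  rewrite ell_rec /tt /ell /S (_ : Pseq 1 = P1) // tsubP1 D1 /ST /aa /KK.
  apply: g3; [exact: x_neq0|exact: y_neq0|exact: z_neq0].
rewrite -IH (ell_rec n.+1) (ell_rec n).
set t := tt; set a := ell n; set b := ell n.+1.
ring.
Qed.

Lemma ell_neq0 n : ell n != 0.
Proof.
case: n => [|n]; first exact: x_neq0.
rewrite /ell. apply: mulf_neq0; first exact: S_neq0.
rewrite invr_eq0; exact: D_neq0.
Qed.

Lemma g6 (F : fieldType) (a b k c : F) : a != 0 -> c * a - b ^+ 2 = k ^+ 2 ->
  c = (k ^+ 2 + b ^+ 2) / a.
Proof. move=> ha h. rewrite -h. field. by rewrite ha. Qed.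

Lemma M_ell M : is_markov_family M -> forall n, M n n.+1 = ell n.
Proof.
case=> H10 H01 H11 Hrec.
have H12 : M 1%N 2%N = ell 1.
  have := Hrec 1%N 0%N 0%N 1%N isT isT isT isT.
  rewrite /= H10 H01 H11 => ->.
  rewrite /ell /S (_ : Pseq 1 = P1) // tsubP1 D1.
  apply: g4; [exact: y_neq0|exact: z_neq0].
suff: forall n, M n n.+1 = ell n /\ M n.+1 n.+2 = ell n.+1 by move=> h n; case: (h n).
elim=> [|n [IH1 IH2]]; first by split.
split; first exact: IH2.
have ad : admissible n n.+1.
  apply/orP; right. rewrite ltn0Sn leqnSn /=. exact: coprimenS.
have := Hrec n n.+1 1%N 1%N ad isT _ _.
rewrite (_ : (n + 2 * 1 = n.+2)%N); last by lia.
rewrite (_ : (n.+1 + 2 * 1 = n.+3)%N); last by lia.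
rewrite (_ : (n + 1 = n.+1)%N); last by lia.
rewrite (_ : (n.+1 + 1 = n.+2)%N); last by lia.
rewrite H11 IH1 IH2 => ->; last 2 first.
- apply/orP; right. apply/eqP. lia.
- lia.
apply/esym/g6; first exact: ell_neq0.
exact: cassini.
Qed.

Lemma tnth_sq (i : 'I_3) : tnth sq i = 'X_i ^+ 2.
Proof.
case: i => [[|[|[|k]]] hk] //=; try by congr ('X_ _ ^+ 2); apply: val_inj.
Qed.

Lemma subX (m : 'X_{1..3}) : sub 'X_[m] = 'X_[m + m].
Proof.
rewrite /sub comp_mpolyX mpolyXD -expr2 [X in X ^+ 2]mpolyXE_id -prodrXl.
apply: eq_bigr => i _. by rewrite tnth_sq exprAC.
Qed.

Lemma sq_coef (p : Poly3) (m : 'X_{1..3}) : (sub p)@_(m + m) = p@_m.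
Proof.
rewrite /sub comp_mpolyEX (raddf_sum (mcoeff (m + m))).
rewrite [in RHS](mpolyE p) (raddf_sum (mcoeff m)).
apply: eq_bigr => m' _.
rewrite (_ : 'X_[m'] \mPo sq = sub 'X_[m']) // subX /= !mcoeffZ !mcoeffX.
congr (_ * (nat_of_bool _)%:R).
have [->|ne] := eqVneq m' m; first by rewrite eqxx.
apply/negbTE/eqP => h; move/eqP: ne; apply.
apply/mnmP => i. move/mnmP: h => /(_ i). rewrite !mnmDE. lia.
Qed.

Lemma divIf_gen (F : fieldType) (a b d : F) : d != 0 -> a / d = b / d -> a = b.
Proof. by move=> hd /(mulIf (invr_neq0 hd)). Qed.

Lemma P_eq M n P : is_markov_family M -> (0 < n)%N -> is_numerator M n n.+1 P ->
  P = Pseq n.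
Proof.
move=> HM hn [_ HP].
have h := etrans (esym HP) (M_ell M HM n).
case: n hn HP h => [//|n _ HP h].
have h2 : tof (sub P) = tof (sub (Pseq n.+1)).
  rewrite /ell /S subst_sub -/(D n.+1) in h.
  exact: (@divIf_gen _ _ _ (D n.+1) (D_neq0 n.+1) h).
move/eqP: h2; rewrite /tof tofrac_eq => /eqP h3.
apply/mpolyP => m. rewrite -(sq_coef P m) -(sq_coef (Pseq n.+1) m) h3. reflexivity.
Qed.

Notation R2 := {poly {poly int}}.
Definition hh (i : 'I_3) : R2 :=
  if val i == 0%N then 'X else if val i == 1%N then 1 else ('X : {poly int})%:P.
Definition phi (p : Poly3) : R2 := mmap ( *~%R (1 : R2)) hh p.

Lemma coef_term (c : int) (m : 'X_{1..3}) j :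
  ((c%:~R : R2) * mmap1 hh m)`_1`_j =
  c * ((m ord0 == 1%N) && (m (lift ord0 (lift ord0 ord0)) == j))%:R.
Proof.
rewrite /mmap1 !big_ord_recl big_ord0 /hh /= expr1n mul1r mulr1 -polyC_exp.
rewrite mulrzl coefMrz coefMC coefXn coefMrz mulr_natl coefMn coefXn.
rewrite [(1%N == _)]eq_sym [(j == _)]eq_sym.
case: (m ord0 == 1%N); case: (_ == j); rewrite /= ?mulr1n ?mulr0n ?mul0rz ?mulr0 ?mulr1 ?intz //.
Qed.


Lemma ord3_cases (i : 'I_3) :
  [\/ i = ord0, i = lift ord0 ord0 | i = lift ord0 (lift ord0 ord0)].
Proof.
case: i => [[|[|[|k]]] hk]; try by [].
- by apply: Or31; apply: val_inj.
- by apply: Or32; apply: val_inj.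
- by apply: Or33; apply: val_inj.
Qed.

Lemma phi_coef (p : Poly3) (n : nat) : (2 <= n)%N ->
  p \is ishomog1 (n + n.+1 - 1)%N mdeg ->
  (phi p)`_1`_(n - 2) = p@_[multinom [tuple 1%N; n.+1; (n - 2)%N]].
Proof.
move=> hn /dhomogP Hh.
set t := [multinom [tuple 1%N; n.+1; (n - 2)%N]].
rewrite /phi /mmap coef_sum coef_sum.
rewrite [in RHS](mpolyE p) (raddf_sum (mcoeff t)).
rewrite big_seq [in RHS]big_seq.
apply: eq_bigr => m hm /=.
rewrite coef_term mcoeffZ mcoeffX.
congr (_ * (nat_of_bool _)%:R).
have hd : (mdeg m = n + n.+1 - 1)%N := Hh m hm. rewrite mdegE !big_ord_recl big_ord0 addn0 in hd.
apply/andP/eqP => [[/eqP h0 /eqP h2]|->]; last by [].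
apply/mnmP => i.
case: (ord3_cases i) => ->; rewrite ?h0 ?h2 //=.
change (t (lift ord0 ord0)) with n.+1. lia.
Qed.

Notation s := ('X : {poly int}).

Lemma phiM p q : phi (p * q) = phi p * phi q. Proof. by rewrite /phi rmorphM. Qed.
Lemma phiD p q : phi (p + q) = phi p + phi q. Proof. by rewrite /phi rmorphD. Qed.
Lemma phiB p q : phi (p - q) = phi p - phi q. Proof. by rewrite /phi rmorphB. Qed.
Lemma phi1 : phi 1 = 1. Proof. by rewrite /phi rmorph1. Qed.
Lemma phiU : phi U = 'X. Proof. by rewrite /phi /U mmapX mmap1U. Qed.
Lemma phiV : phi V = 1. Proof. by rewrite /phi /V mmapX mmap1U. Qed.
Lemma phiW : phi W = s%:P. Proof. by rewrite /phi /W mmapX mmap1U. Qed.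

Lemma phiTp : phi Tp = (s + 1)%:P + (s + 2%:R)%:P * 'X + 'X * 'X.
Proof.
rewrite /Tp ?(phiD, phiM, phiU, phiV, phiW) .
ring.
Qed.
Lemma phiCq : phi Cq = (s * s)%:P * 'X.
Proof. rewrite /Cq ?(phiD, phiM, phiU, phiV, phiW) .
ring. Qed.
Lemma phiP1 : phi P1 = 1%:P + (s + 2%:R)%:P * 'X + 'X * 'X.
Proof.
rewrite /P1 ?(phiD, phiM, phiU, phiV, phiW) .
ring.
Qed.

Lemma cT0 (a b : {poly int}) (q : R2) : ((a%:P + b%:P * 'X + 'X * 'X) * q)`_0 = a * q`_0.
Proof. rewrite !mulrDl !coefD coefCM -!mulrA coefCM ?(@coefXM {poly int}) /=. by rewrite mulr0 !addr0. Qed.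
Lemma cT1 (a b : {poly int}) (q : R2) :
  ((a%:P + b%:P * 'X + 'X * 'X) * q)`_1 = a * q`_1 + b * q`_0.
Proof. rewrite !mulrDl !coefD coefCM -!mulrA coefCM ?(@coefXM {poly int}) /= ?(@coefXM {poly int}) /=. by rewrite addr0. Qed.
Lemma cC0 (a : {poly int}) (q : R2) : ((a%:P * 'X) * q)`_0 = 0.
Proof. rewrite -mulrA coefCM (@coefXM {poly int}) /=. by rewrite mulr0. Qed.
Lemma cC1 (a : {poly int}) (q : R2) : ((a%:P * 'X) * q)`_1 = a * q`_0.
Proof. by rewrite -mulrA coefCM (@coefXM {poly int}). Qed.

Definition Q k := phi (Pseq k).
Definition A k := (Q k)`_0.
Definition B k := (Q k)`_1.

Lemma Q_rec k : Q k.+2 = phi Tp * Q k.+1 - phi Cq * Q k.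
Proof. by rewrite /Q Pseq_rec phiB !phiM. Qed.

Lemma A_rec k : A k.+2 = (s + 1) * A k.+1.
Proof. by rewrite /A Q_rec coefB phiTp phiCq cT0 cC0 subr0. Qed.
Lemma B_rec k : B k.+2 = (s + 1) * B k.+1 + (s + 2%:R) * A k.+1 - (s * s) * A k.
Proof. by rewrite /B /A Q_rec coefB phiTp phiCq cT1 cC1. Qed.

Lemma A0 : A 0 = 1. Proof. by rewrite /A /Q (_ : Pseq 0 = 1) // phi1 coefC. Qed.
Lemma A1 : A 1 = 1.
Proof. by rewrite /A /Q (_ : Pseq 1 = P1) // phiP1 -[_ + 'X * 'X]mulr1 cT0 coefC mulr1. Qed.
Lemma B0 : B 0 = 0. Proof. by rewrite /B /Q (_ : Pseq 0 = 1) // phi1 coefC. Qed.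
Lemma B1 : B 1 = s + 2%:R.
Proof. by rewrite /B /Q (_ : Pseq 1 = P1) // phiP1 -[_ + 'X * 'X]mulr1 cT1 !coefC /= mulr0 mulr1 add0r. Qed.

Lemma A_closed k : A k.+1 = (s + 1) ^+ k.
Proof. elim: k => [|k IH]; first by rewrite A1 expr0. by rewrite A_rec IH exprS. Qed.

Lemma B2 : B 2 = (s + 1) *+ 4.
Proof. rewrite B_rec B1 A1 A0. ring. Qed.

Lemma gB (R : comRingType) (x u K : R) :
 (x + 1) * ((x + 1) * ((x + 1) * u) * 4%:R + (u * x) * (3%:R * (K + 1)) + u * (2%:R * (K + 1)))
   + (x + 2%:R) * ((x + 1) * ((x + 1) * u)) - x * x * ((x + 1) * u)
 = (x + 1) * ((x + 1) * ((x + 1) * u)) * 4%:R + ((x + 1) * u * x) * (3%:R * (K + 1 + 1))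
   + ((x + 1) * u) * (2%:R * (K + 1 + 1)).
Proof. ring. Qed.

Lemma gB0 (R : comRingType) (x : R) :
 (x + 1) * ((x + 1) *+ 4) + (x + 2%:R) * ((x + 1) * 1) - x * x * 1
 = (x + 1) * ((x + 1) * 1) * 4%:R + (1 * x) * (3%:R * (0 + 1)) + 1 * (2%:R * (0 + 1)).
Proof. ring. Qed.

Definition Bc k : {poly int} := (s + 1) ^+ k.+2 * 4%:R + ((s + 1) ^+ k * s) * (3%:R * (k%:R + 1))
  + (s + 1) ^+ k * (2%:R * (k%:R + 1)).

Lemma B_closed k : B k.+3 = Bc k.
Proof.
elim: k => [|k IH].
  rewrite /Bc B_rec B2 !A_closed !exprS !expr0. exact: gB0.
rewrite /Bc B_rec IH /Bc !A_closed !exprS -[(k.+1)%:R]natr1. exact: gB.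
Qed.

Lemma pw_coef (p : {poly int}) i : ((p * (s + 1)))`_i.+1 = p`_i + p`_i.+1.
Proof. by rewrite mulrDr mulr1 coefD coefMX. Qed.

Lemma L2 k j : ((s + 1) ^+ k)`_(k + j.+1) = 0.
Proof.
elim: k j => [|k IH] j.
  by rewrite expr0 coefC.
by rewrite exprSr addSn pw_coef IH -addnS IH addr0.
Qed.

Lemma L1 k : ((s + 1) ^+ k)`_k = 1.
Proof.
elim: k => [|k IH]; first by rewrite expr0 coefC.
by rewrite exprSr pw_coef IH -addn1 L2 addr0.
Qed.

Lemma L3 k : ((s + 1) ^+ k.+1)`_k = k.+1%:R.
Proof.
elim: k => [|k IH].
  by rewrite expr1 coefD coefX coefC.
by rewrite exprSr pw_coef IH L1 natr1.
Qed.

Lemma final n : (2 <= n)%N -> (phi (Pseq n))`_1`_(n - 2) = 7 * n%:Z - 10.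
Proof.
case: n => [|[|n]] // _.
case: n => [|k].
  rewrite -/(Q 2) -/(B 2) B2 coefMn coefD coefX coefC /=. lia.
rewrite -/(Q k.+3) -/(B k.+3) B_closed (_ : (k.+3 - 2 = k.+1)%N); last by lia.
rewrite /Bc natr1 -!natrM !mulr_natr !coefD !coefMn L3 coefMX /= L1 -(addn1 k) L2.
rewrite mul0rn addr0. lia.
Qed.

Theorem mainTheorem19 :
  forall M : nat -> nat -> RatFun, is_markov_family M ->
  forall n : nat, (2 <= n)%N ->
  forall P : Poly3, is_numerator M n n.+1 P ->
  P@_[multinom [tuple 1%N; n.+1; (n - 2)%N]] = (7 * n%:Z - 10)%R.
Proof.
move=> M HM n hn P HnumP.
have hP := P_eq M n P HM (leq_trans (isT : (0 < 2)%N) hn) HnumP.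
case: HnumP => Hh _.
rewrite -(phi_coef P n hn Hh) hP.
exact: final n hn.
Qed.
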